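(* Let $g:[a,b]\to\mathbb R$ be increasing and left-continuous at every point of $(a,b)$, and let $f:[a,b]\to\mathbb R$ be $g$-Lipschitz continuous with Lipschitz constant $H$. Then $f^C$ is $g^C$-Lipschitz continuous with Lipschitz constant $H$.
   Context: For a function $\varphi:[a,b]\to\mathbb R$ having right limits, $\Delta^+\varphi(t)=\varphi(t^+)-\varphi(t)$, its jump part is $\varphi^B(t)=\sum_{s\in[a,t)}\Delta^+\varphi(s)$ and its continuous part is $\varphi^C=\varphi-\varphi^B$ (applied to both $f$ and $g$). For functions $u,v$ on $[a,b]$, $u$ is $v$-Lipschitz continuous with constant $H$ if $|u(t)-u(s)|\le H|v(t)-v(s)|$ for all $t,s\in[a,b]$. *)

(* Defs.v *)
From Stdlib Require Import Reals Lra List Classical ClassicalEpsilon.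
Import ListNotations.
Open Scope R_scope.

Definition right_lim_at (phi : R -> R) (b t l : R) : Prop :=
  forall eps, 0 < eps -> exists delta, 0 < delta /\
    forall s, t < s < t + delta -> s <= b -> Rabs (phi s - l) < eps.

(* phi(t^+) (chosen by Hilbert epsilon; unique when it exists and t < b) *)
Definition rlim (phi : R -> R) (b t : R) : R :=
  epsilon (inhabits 0) (fun l => right_lim_at phi b t l).

Definition delta_plus (phi : R -> R) (b t : R) : R := rlim phi b t - phi t.

Definition list_sum (u : R -> R) (F : list R) : R :=
  fold_right (fun x acc => u x + acc) 0 F.

(* Unordered (possibly uncountable-index) sum of u over the set D equals S:
   the net of finite partial sums over finite subsets of D converges to S. *)
Definition has_sum_over (u : R -> R) (D : R -> Prop) (S : R) : Prop :=
  forall eps, 0 < eps -> exists F0 : list R, Forall D F0 /\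
    forall F : list R, NoDup F -> Forall D F -> incl F0 F ->
      Rabs (list_sum u F - S) < eps.

(* Jump part: phi^B(t) = sum_{s in [a,t)} Delta^+ phi(s) *)
Definition jump_part (phi : R -> R) (a b t : R) : R :=
  epsilon (inhabits 0)
    (fun S => has_sum_over (delta_plus phi b) (fun s => a <= s < t) S).

(* Continuous part: phi^C = phi - phi^B *)
Definition cont_part (phi : R -> R) (a b t : R) : R :=
  phi t - jump_part phi a b t.

Definition rel_lipschitz (u v : R -> R) (a b H : R) : Prop :=
  forall t s, a <= t <= b -> a <= s <= b ->
    Rabs (u t - u s) <= H * Rabs (v t - v s).

Definition increasing_on (g : R -> R) (a b : R) : Prop :=
  forall x y, a <= x <= b -> a <= y <= b -> x <= y -> g x <= g y.

Definition left_continuous_at (g : R -> R) (a x : R) : Prop :=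
  forall eps, 0 < eps -> exists delta, 0 < delta /\
    forall y, x - delta < y <= x -> a <= y -> Rabs (g y - g x) < eps.

(* Main.v *)
Require Import Defs.
From Stdlib Require Import Reals Lra Lia List Classical ClassicalEpsilon.
Import ListNotations.
Import Defs.
Open Scope R_scope.

Lemma abs_bounds x a : Rabs x <= a -> -a <= x <= a.
Proof. unfold Rabs; destruct (Rcase_abs x); intros; lra. Qed.

Lemma rl_ext phi psi b t l : (forall w, phi w = psi w) -> right_lim_at phi b t l -> right_lim_at psi b t l.
Proof. intros E h eps he. destruct (h eps he) as [d [hd Hd]]. exists d; split; auto.
  intros s hs hb. rewrite <- E. auto. Qed.

Lemma rl_comb p q b t l1 l2 c k1 k2 :
  right_lim_at p b t l1 -> right_lim_at q b t l2 ->
  right_lim_at (fun w => c + k1 * p w + k2 * q w) b t (c + k1 * l1 + k2 * l2).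
Proof.
  intros h1 h2 eps he.
  assert (hk : 0 < Rabs k1 + Rabs k2 + 1) by (pose proof (Rabs_pos k1); pose proof (Rabs_pos k2); lra).
  set (e := eps / (Rabs k1 + Rabs k2 + 1)).
  assert (he' : 0 < e) by (unfold e; apply Rdiv_lt_0_compat; lra).
  destruct (h1 e he') as [d1 [hd1 H1]]. destruct (h2 e he') as [d2 [hd2 H2]].
  exists (Rmin d1 d2); split. apply Rmin_pos; lra.
  intros s hs hb.
  assert (hs1 : t < s < t + d1) by (pose proof (Rmin_l d1 d2); lra).
  assert (hs2 : t < s < t + d2) by (pose proof (Rmin_r d1 d2); lra).
  specialize (H1 s hs1 hb). specialize (H2 s hs2 hb).
  replace (c + k1 * p s + k2 * q s - (c + k1 * l1 + k2 * l2)) with (k1 * (p s - l1) + k2 * (q s - l2)) by ring.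
  eapply Rle_lt_trans. apply Rabs_triang. rewrite !Rabs_mult.
  assert (Rabs k1 * Rabs (p s - l1) <= Rabs k1 * e) by (apply Rmult_le_compat_l; [apply Rabs_pos| lra]).
  assert (Rabs k2 * Rabs (q s - l2) <= Rabs k2 * e) by (apply Rmult_le_compat_l; [apply Rabs_pos| lra]).
  assert (eps = (Rabs k1 + Rabs k2 + 1) * e) by (unfold e; field; lra).
  lra.
Qed.

Lemma rl_le phi psi b u l m c :
  u < b -> u < c -> right_lim_at phi b u l -> right_lim_at psi b u m ->
  (forall w, u < w < c -> w <= b -> phi w <= psi w) -> l <= m.
Proof.
  intros hub huc h1 h2 hle.
  destruct (Rle_or_lt l m) as [|hlt]; auto.
  set (e := (l - m)/2).
  assert (he: 0 < e) by (unfold e; lra).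
  destruct (h1 e he) as [d1 [hd1 H1]]. destruct (h2 e he) as [d2 [hd2 H2]].
  set (d := Rmin (Rmin d1 d2) (Rmin (c - u) (b - u))).
  assert (hd : 0 < d) by (unfold d; repeat apply Rmin_pos; lra).
  pose proof (Rmin_l (Rmin d1 d2) (Rmin (c - u) (b - u))).
  pose proof (Rmin_r (Rmin d1 d2) (Rmin (c - u) (b - u))).
  pose proof (Rmin_l d1 d2). pose proof (Rmin_r d1 d2).
  pose proof (Rmin_l (c-u) (b-u)). pose proof (Rmin_r (c-u) (b-u)).
  fold d in H, H0.
  set (w := u + d/2).
  assert (hw1 : u < w < u + d1) by (unfold w; lra).
  assert (hw2 : u < w < u + d2) by (unfold w; lra).
  assert (hwb : w <= b) by (unfold w; lra).
  specialize (H1 w hw1 hwb). specialize (H2 w hw2 hwb).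
  apply Rabs_def2 in H1. apply Rabs_def2 in H2.
  assert (phi w <= psi w) by (apply hle; [unfold w; lra| auto]).
  unfold e in *; lra.
Qed.

Lemma rl_unique phi b t l1 l2 : t < b -> right_lim_at phi b t l1 -> right_lim_at phi b t l2 -> l1 = l2.
Proof. intros htb h1 h2. apply Rle_antisym; eapply rl_le; eauto; intros; lra. Qed.

Lemma rlim_eq phi b t l : t < b -> right_lim_at phi b t l -> rlim phi b t = l.
Proof. intros htb h. unfold rlim.
  assert (hs := epsilon_spec (inhabits 0) (fun l => right_lim_at phi b t l) (ex_intro _ l h)).
  simpl in hs. eapply rl_unique; eauto. Qed.

Lemma rl_inc h a b t : increasing_on h a b -> a <= t < b ->
  exists l, right_lim_at h b t l /\ h t <= l.
Proof.
  intros hi ht.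
  set (E := fun y => exists w, t < w <= b /\ y = - h w).
  assert (hb : bound E). { exists (- h t). intros y [w [hw ->]]. apply Ropp_le_contravar. apply hi; lra. }
  assert (hne : exists y, E y) by (exists (- h b); exists b; split; [lra|reflexivity]).
  destruct (completeness E hb hne) as [m [hub hlub]].
  exists (- m). split.
  - intros eps he.
    assert (hex : exists y, E y /\ m - eps < y).
    { apply NNPP; intro hn. assert (hu : is_upper_bound E (m - eps)).
      { intros y hy. destruct (Rle_or_lt y (m - eps)); auto. exfalso; apply hn; eauto. }
      specialize (hlub _ hu). lra. }
    destruct hex as [y [[w [hw ->]] hy]].
    exists (w - t); split; [lra|].
    intros s hs hsb.
    assert (h s <= h w) by (apply hi; lra).
    assert (- h s <= m) by (apply hub; exists s; split; [lra|reflexivity]).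
    apply Rabs_def1; lra.
  - assert (m <= - h t) by (apply hlub; intros y [w [hw ->]]; apply Ropp_le_contravar, hi; lra).
    lra.
Qed.

Lemma lip1 f g a b H x y : increasing_on g a b -> rel_lipschitz f g a b H ->
  a <= x -> x <= y -> y <= b -> Rabs (f y - f x) <= H * (g y - g x).
Proof. intros hg hf hx hxy hy. assert (g x <= g y) by (apply hg; lra).
  rewrite <- (Rabs_right (g y - g x)) by lra. apply hf; lra. Qed.

Lemma lip2 f g a b H x y : increasing_on g a b -> rel_lipschitz f g a b H ->
  a <= x -> x <= y -> y <= b -> Rabs (f y - f x) <= Rabs H * (g y - g x).
Proof. intros hg hf hx hxy hy. assert (g x <= g y) by (apply hg; lra).
  eapply Rle_trans. eapply lip1; eauto. apply Rmult_le_compat_r. lra. apply RRle_abs. Qed.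

Lemma rl_f f g a b H t : increasing_on g a b -> rel_lipschitz f g a b H -> a <= t < b ->
  exists l, right_lim_at f b t l.
Proof.
  intros hg hf ht.
  assert (hphi : increasing_on (fun w => f w + Rabs H * g w) a b).
  { intros x y hx hy hxy. pose proof (lip2 f g a b H x y hg hf ltac:(lra) hxy ltac:(lra)).
    apply abs_bounds in H0. lra. }
  destruct (rl_inc _ a b t hphi ht) as [lp [hlp _]].
  destruct (rl_inc g a b t hg ht) as [lg [hlg _]].
  exists (0 + 1 * lp + (- Rabs H) * lg).
  eapply rl_ext; [|apply (rl_comb _ _ b t lp lg 0 1 (- Rabs H) hlp hlg)].
  intros w; simpl; ring.
Qed.

Lemma key f g a b H u v : increasing_on g a b -> rel_lipschitz f g a b H -> a <= u -> u < v -> v <= b ->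
  Rabs (f v - rlim f b u) <= H * (g v - rlim g b u).
Proof.
  intros hg hf hu huv hvb.
  destruct (rl_f f g a b H u hg hf ltac:(lra)) as [lf hlf].
  destruct (rl_inc g a b u hg ltac:(lra)) as [lg [hlg _]].
  rewrite (rlim_eq f b u lf), (rlim_eq g b u lg) by (auto; lra).
  assert (hc1 := rl_comb g g b u lg lg (f v + H * g v) (- H) 0 hlg hlg).
  assert (hc2 := rl_comb g g b u lg lg (f v - H * g v) H 0 hlg hlg).
  assert (lf <= f v + H * g v + - H * lg + 0 * lg).
  { apply (rl_le f _ b u lf _ v ltac:(lra) huv hlf hc1).
    intros w hw hwb. pose proof (lip1 f g a b H w v hg hf ltac:(lra) ltac:(lra) hvb).
    apply abs_bounds in H0. lra. }
  assert (f v - H * g v + H * lg + 0 * lg <= lf).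
  { apply (rl_le _ f b u _ lf v ltac:(lra) huv hc2 hlf).
    intros w hw hwb. pose proof (lip1 f g a b H w v hg hf ltac:(lra) ltac:(lra) hvb).
    apply abs_bounds in H1. lra. }
  apply Rabs_le. lra.
Qed.

Lemma dbound f g a b H x : increasing_on g a b -> rel_lipschitz f g a b H -> a <= x < b ->
  Rabs (delta_plus f b x) <= Rabs H * delta_plus g b x.
Proof.
  intros hg hf hx. unfold delta_plus.
  destruct (rl_f f g a b H x hg hf hx) as [lf hlf].
  destruct (rl_inc g a b x hg hx) as [lg [hlg _]].
  rewrite (rlim_eq f b x lf), (rlim_eq g b x lg) by (auto; lra).
  assert (hc1 := rl_comb g g b x lg lg (f x - Rabs H * g x) (Rabs H) 0 hlg hlg).
  assert (hc2 := rl_comb g g b x lg lg (f x + Rabs H * g x) (- Rabs H) 0 hlg hlg).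
  assert (lf <= f x - Rabs H * g x + Rabs H * lg + 0 * lg).
  { apply (rl_le f _ b x lf _ b ltac:(lra) ltac:(lra) hlf hc1).
    intros w hw hwb. pose proof (lip2 f g a b H x w hg hf ltac:(lra) ltac:(lra) hwb).
    apply abs_bounds in H0. lra. }
  assert (f x + Rabs H * g x + - Rabs H * lg + 0 * lg <= lf).
  { apply (rl_le _ f b x _ lf b ltac:(lra) ltac:(lra) hc2 hlf).
    intros w hw hwb. pose proof (lip2 f g a b H x w hg hf ltac:(lra) ltac:(lra) hwb).
    apply abs_bounds in H1. lra. }
  apply Rabs_le. lra.
Qed.

Lemma dg_nonneg g a b x : increasing_on g a b -> a <= x < b -> 0 <= delta_plus g b x.
Proof. intros hg hx. unfold delta_plus. destruct (rl_inc g a b x hg hx) as [lg [hlg hle]].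
  rewrite (rlim_eq g b x lg) by (auto; lra). lra. Qed.

Lemma list_sum_app u l1 l2 : list_sum u (l1 ++ l2) = list_sum u l1 + list_sum u l2.
Proof. induction l1; simpl; [ring| rewrite IHl1; ring]. Qed.

Lemma list_sum_le u v F : (forall x, In x F -> u x <= v x) -> list_sum u F <= list_sum v F.
Proof. induction F as [|x F IH]; simpl; intros h; [lra|].
  assert (u x <= v x) by auto. assert (list_sum u F <= list_sum v F) by auto. lra. Qed.

Lemma list_sum_ext u v F : (forall x, In x F -> u x = v x) -> list_sum u F = list_sum v F.
Proof. induction F as [|x F IH]; simpl; intros h; [lra|].
  rewrite h, IH; auto. Qed.

Lemma list_sum_scal u k F : list_sum (fun x => k * u x) F = k * list_sum u F.
Proof. induction F; simpl; [ring| rewrite IHF; ring]. Qed.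

Lemma list_sum_minus u v F : list_sum (fun x => u x - v x) F = list_sum u F - list_sum v F.
Proof. induction F; simpl; [ring| rewrite IHF; ring]. Qed.

Lemma list_sum_filter u p l : list_sum u l = list_sum u (filter p l) + list_sum u (filter (fun x => negb (p x)) l).
Proof. induction l as [|x l IH]; simpl; [ring|]. destruct (p x); simpl; rewrite IH; ring. Qed.

Lemma list_max (B : list R) : B <> [] -> exists m, In m B /\ forall x, In x B -> x <= m.
Proof.
  induction B as [|x l IH]; intro hB; [congruence|].
  destruct l as [|y l'].
  - exists x; split; [left; auto|]. intros z [<-|[]]; lra.
  - destruct IH as [m [hm hmax]]; [discriminate|].
    exists (Rmax x m). split.
    + unfold Rmax; destruct (Rle_dec x m); [right; auto|left; auto].
    + intros z [<-|hz]. apply Rmax_l. eapply Rle_trans; [apply hmax; auto| apply Rmax_r].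
Qed.

Lemma FI f g a b H : increasing_on g a b -> rel_lipschitz f g a b H ->
  forall n B s t, (length B <= n)%nat -> NoDup B -> (forall x, In x B -> s <= x < t) ->
  a <= s -> s <= t -> t <= b ->
  Rabs (f t - f s - list_sum (delta_plus f b) B) <= H * (g t - g s - list_sum (delta_plus g b) B).
Proof.
  intros hg hf n. induction n as [|n IH]; intros B s t hl hnd hin has hst htb.
  - destruct B; [|simpl in hl; lia]. simpl.
    replace (f t - f s - 0) with (f t - f s) by ring. replace (g t - g s - 0) with (g t - g s) by ring.
    eapply lip1; eauto.
  - destruct B as [|x0 B0].
    + simpl. replace (f t - f s - 0) with (f t - f s) by ring. replace (g t - g s - 0) with (g t - g s) by ring.
      eapply lip1; eauto.
    + destruct (list_max (x0::B0)) as [m [hm hmax]]; [discriminate|].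
      destruct (in_split m (x0::B0) hm) as [l1 [l2 heq]].
      assert (hmr : s <= m < t) by (apply hin; auto).
      assert (hin' : forall x, In x (l1 ++ l2) -> s <= x < m).
      { intros x hx. assert (hxB : In x (x0::B0)).
        { rewrite heq. apply in_or_app. apply in_app_or in hx. destruct hx; [left|right;right]; auto. }
        assert (hnm := NoDup_remove_2 l1 l2 m ltac:(rewrite <- heq; auto)).
        split. apply hin in hxB; lra. assert (x <= m) by (apply hmax; auto).
        assert (x <> m) by (intro; subst; auto). lra. }
      rewrite heq in hnd, hl. rewrite heq.
      assert (hnd' := NoDup_remove_1 l1 l2 m hnd).
      assert (hlen : (length (l1 ++ l2) <= n)%nat). { rewrite length_app in *; simpl in hl; lia. }
      specialize (IH (l1++l2) s m hlen hnd' hin' has (proj1 hmr) ltac:(lra)).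
      assert (hk := key f g a b H m t hg hf ltac:(lra) (proj2 hmr) htb).
      rewrite !list_sum_app in *. simpl. unfold delta_plus at 2 4.
      set (A1 := list_sum (delta_plus f b) l1) in *.
      set (A2 := list_sum (delta_plus f b) l2) in *.
      replace (f t - f s - (A1 + (rlim f b m - f m + A2))) with
        ((f m - f s - (A1 + A2)) + (f t - rlim f b m)) by ring.
      eapply Rle_trans; [apply Rabs_triang|]. unfold delta_plus in *. lra.
Qed.

Lemma has_sum_ext u v D S : (forall x, D x -> u x = v x) -> has_sum_over u D S -> has_sum_over v D S.
Proof. intros E h eps he. destruct (h eps he) as [F0 [hF0 hF]]. exists F0; split; auto.
  intros F hnd hD hi. rewrite <- (list_sum_ext u v F). auto.
  intros x hx. apply E. rewrite Forall_forall in hD. auto. Qed.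

Lemma has_sum_minus u v D S T : has_sum_over u D S -> has_sum_over v D T ->
  has_sum_over (fun x => u x - v x) D (S - T).
Proof. intros hu hv eps he.
  destruct (hu (eps/2) ltac:(lra)) as [F1 [h1 k1]]. destruct (hv (eps/2) ltac:(lra)) as [F2 [h2 k2]].
  exists (F1 ++ F2). split. apply Forall_app; auto.
  intros F hnd hD hi. rewrite list_sum_minus.
  assert (incl F1 F) by (intros x hx; apply hi, in_or_app; auto).
  assert (incl F2 F) by (intros x hx; apply hi, in_or_app; auto).
  specialize (k1 F hnd hD H). specialize (k2 F hnd hD H0).
  replace (list_sum u F - list_sum v F - (S - T)) with ((list_sum u F - S) - (list_sum v F - T)) by ring.
  eapply Rle_lt_trans. apply Rabs_triang. rewrite Rabs_Ropp. lra. Qed.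

Lemma list_sum_nonneg u D F : (forall x, D x -> 0 <= u x) -> Forall D F -> 0 <= list_sum u F.
Proof. intros h hF. induction hF; simpl; [lra|]. pose proof (h x H). lra. Qed.

Lemma list_sum_mono u D : (forall x, D x -> 0 <= u x) -> forall F0 F, NoDup F0 -> NoDup F ->
  incl F0 F -> Forall D F -> list_sum u F0 <= list_sum u F.
Proof.
  intros hu F0. induction F0 as [|x F0 IH]; intros F hnd0 hnd hi hD.
  - simpl. eapply list_sum_nonneg; eauto.
  - assert (hx : In x F) by (apply hi; left; auto).
    destruct (in_split x F hx) as [l1 [l2 ->]].
    inversion hnd0; subst.
    assert (incl F0 (l1 ++ l2)).
    { intros y hy. assert (hyF : In y (l1 ++ x :: l2)) by (apply hi; right; auto).
      apply in_app_or in hyF. apply in_or_app. destruct hyF as [|[<-|]]; auto. contradiction. }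
    assert (hD' : Forall D (l1 ++ l2)).
    { rewrite Forall_forall in *. intros y hy. apply hD. apply in_app_or in hy; apply in_or_app.
      destruct hy; [left|right;right]; auto. }
    specialize (IH (l1 ++ l2) H2 (NoDup_remove_1 _ _ _ hnd) H hD').
    rewrite list_sum_app in *. simpl.
    rewrite Forall_forall in hD. assert (0 <= u x) by (apply hu, hD, in_or_app; right; left; auto).
    lra.
Qed.

Lemma sum_nonneg_exists u D M : (forall x, D x -> 0 <= u x) ->
  (forall F, NoDup F -> Forall D F -> list_sum u F <= M) -> exists S, has_sum_over u D S.
Proof.
  intros hu hM.
  set (E := fun y => exists F, NoDup F /\ Forall D F /\ y = list_sum u F).
  assert (hb : bound E) by (exists M; intros y [F [h1 [h2 ->]]]; auto).
  assert (hne : exists y, E y) by (exists 0; exists []; split; [constructor|split; [constructor|reflexivity]]).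
  destruct (completeness E hb hne) as [S [hub hlub]].
  exists S. intros eps he.
  assert (hex : exists y, E y /\ S - eps < y).
  { apply NNPP; intro hn. assert (hu' : is_upper_bound E (S - eps)).
    { intros y hy. destruct (Rle_or_lt y (S - eps)); auto. exfalso; apply hn; eauto. }
    specialize (hlub _ hu'). lra. }
  destruct hex as [y [[F0 [hn0 [hD0 ->]]] hy]].
  exists F0. split; auto. intros F hnd hD hi.
  assert (list_sum u F <= S) by (apply hub; exists F; auto).
  assert (list_sum u F0 <= list_sum u F) by (eapply list_sum_mono; eauto).
  apply Rabs_def1; lra.
Qed.

Lemma jump_spec phi a b t : (exists S, has_sum_over (delta_plus phi b) (fun s => a <= s < t) S) ->
  has_sum_over (delta_plus phi b) (fun s => a <= s < t) (jump_part phi a b t).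
Proof. intros h. unfold jump_part. apply (epsilon_spec (inhabits 0) (fun S => has_sum_over (delta_plus phi b) (fun s => a <= s < t) S) h). Qed.

Lemma gsum_bound g a b t F : increasing_on g a b -> a <= t <= b -> NoDup F -> Forall (fun x => a <= x < t) F ->
  list_sum (delta_plus g b) F <= g t - g a.
Proof. intros hg ht hnd hF.
  assert (hl : rel_lipschitz g g a b 1) by (intros x y _ _; lra).
  rewrite Forall_forall in hF.
  pose proof (FI g g a b 1 hg hl (length F) F a t (le_n _) hnd hF ltac:(lra) ltac:(lra) ltac:(lra)).
  pose proof (Rabs_pos (g t - g a - list_sum (delta_plus g b) F)). lra. Qed.

Lemma sum_exists f g a b H t : increasing_on g a b -> rel_lipschitz f g a b H -> a <= t <= b ->
  exists S, has_sum_over (delta_plus f b) (fun s => a <= s < t) S.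
Proof.
  intros hg hf ht.
  set (D := fun s => a <= s < t).
  destruct (sum_nonneg_exists (fun x => delta_plus f b x + Rabs H * delta_plus g b x) D (2 * Rabs H * (g t - g a)))
    as [S1 h1].
  { intros x hx. unfold D in hx. pose proof (dbound f g a b H x hg hf ltac:(lra)).
    apply abs_bounds in H0. lra. }
  { intros F hnd hD. eapply Rle_trans.
    apply (list_sum_le _ (fun x => (2 * Rabs H) * delta_plus g b x)).
    intros x hx. rewrite Forall_forall in hD. specialize (hD x hx). unfold D in hD.
    pose proof (dbound f g a b H x hg hf ltac:(lra)). apply abs_bounds in H0. lra.
    rewrite list_sum_scal. pose proof (gsum_bound g a b t F hg ht hnd hD). pose proof (Rabs_pos H).
    apply Rmult_le_compat_l; lra. }
  destruct (sum_nonneg_exists (fun x => Rabs H * delta_plus g b x) D (Rabs H * (g t - g a))) as [S2 h2].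
  { intros x hx. unfold D in hx. pose proof (dg_nonneg g a b x hg ltac:(lra)). pose proof (Rabs_pos H).
    apply Rmult_le_pos; lra. }
  { intros F hnd hD. rewrite list_sum_scal. pose proof (gsum_bound g a b t F hg ht hnd hD).
    apply Rmult_le_compat_l; [apply Rabs_pos| lra]. }
  exists (S1 - S2). eapply has_sum_ext; [| apply (has_sum_minus _ _ _ _ _ h1 h2)].
  intros x _. simpl. ring.
Qed.

Lemma mainL f g a b H s t e : increasing_on g a b -> rel_lipschitz f g a b H ->
  a <= s -> s < t -> t <= b -> 0 < e ->
  Rabs (cont_part f a b t - cont_part f a b s) <=
    H * (cont_part g a b t - cont_part g a b s) + (2 + 2 * Rabs H) * e.
Proof.
  intros hg hf has hst htb he.
  assert (hl : rel_lipschitz g g a b 1) by (intros x y _ _; lra).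
  assert (hft := jump_spec f a b t (sum_exists f g a b H t hg hf ltac:(lra))).
  assert (hfs := jump_spec f a b s (sum_exists f g a b H s hg hf ltac:(lra))).
  assert (hgt := jump_spec g a b t (sum_exists g g a b 1 t hg hl ltac:(lra))).
  assert (hgs := jump_spec g a b s (sum_exists g g a b 1 s hg hl ltac:(lra))).
  destruct (hft e he) as [F1 [d1 k1]]. destruct (hfs e he) as [F2 [d2 k2]].
  destruct (hgt e he) as [F3 [d3 k3]]. destruct (hgs e he) as [F4 [d4 k4]].
  set (L1 := nodup Req_EM_T (F1 ++ F2 ++ F3 ++ F4)).
  set (p := fun x => if Rlt_dec x s then true else false).
  set (A := filter p L1). set (B := filter (fun x => negb (p x)) L1).
  assert (hL1 : forall x, In x L1 <-> In x (F1 ++ F2 ++ F3 ++ F4)) by (intros; apply nodup_In).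
  rewrite Forall_forall in d1, d2, d3, d4.
  assert (hL1t : Forall (fun x => a <= x < t) L1).
  { rewrite Forall_forall. intros x hx. apply hL1 in hx.
    repeat (apply in_app_or in hx; destruct hx as [hx|hx]);
    [apply d1 | pose proof (d2 x hx) | apply d3 | pose proof (d4 x hx)]; auto; lra. }
  assert (hndL1 : NoDup L1) by apply NoDup_nodup.
  assert (hA : Forall (fun x => a <= x < s) A).
  { rewrite Forall_forall. intros x hx. unfold A in hx. apply filter_In in hx. destruct hx as [hx hp].
    rewrite Forall_forall in hL1t. specialize (hL1t x hx). unfold p in hp.
    destruct (Rlt_dec x s); [lra|discriminate]. }
  assert (hB : forall x, In x B -> s <= x < t).
  { intros x hx. unfold B in hx. apply filter_In in hx. destruct hx as [hx hp].
    rewrite Forall_forall in hL1t. specialize (hL1t x hx). unfold p in hp.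
    destruct (Rlt_dec x s); [discriminate|lra]. }
  assert (hinA : forall x, s > x -> In x (F1 ++ F2 ++ F3 ++ F4) -> In x A).
  { intros x hxs hx. unfold A. apply filter_In. split. apply hL1; auto. unfold p.
    destruct (Rlt_dec x s); [auto|lra]. }
  assert (i1 : incl F1 L1) by (intros x hx; apply hL1; apply in_or_app; auto).
  assert (i3 : incl F3 L1) by (intros x hx; apply hL1; apply in_or_app; right; apply in_or_app; right; apply in_or_app; auto).
  assert (i2 : incl F2 A) by (intros x hx; apply hinA; [pose proof (d2 x hx); lra|]; apply in_or_app; right; apply in_or_app; auto).
  assert (i4 : incl F4 A) by (intros x hx; apply hinA; [pose proof (d4 x hx); lra|]; apply in_or_app; right; apply in_or_app; right; apply in_or_app; auto).
  assert (hndA : NoDup A) by (apply NoDup_filter; auto).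
  assert (hndB : NoDup B) by (apply NoDup_filter; auto).
  specialize (k1 L1 hndL1 hL1t i1). specialize (k3 L1 hndL1 hL1t i3).
  specialize (k2 A hndA hA i2). specialize (k4 A hndA hA i4).
  pose proof (FI f g a b H hg hf (length B) B s t (le_n _) hndB hB has ltac:(lra) htb) as hFI.
  rewrite (list_sum_filter _ p L1) in k1. rewrite (list_sum_filter _ p L1) in k3. fold A B in k1, k3.
  unfold cont_part.
  apply Rabs_def2 in k1. apply Rabs_def2 in k2. apply Rabs_def2 in k3. apply Rabs_def2 in k4.
  set (SfB := list_sum (delta_plus f b) B) in *. set (SgB := list_sum (delta_plus g b) B) in *.
  set (SfA := list_sum (delta_plus f b) A) in *. set (SgA := list_sum (delta_plus g b) A) in *.
  set (Jft := jump_part f a b t) in *. set (Jfs := jump_part f a b s) in *.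
  set (Jgt := jump_part g a b t) in *. set (Jgs := jump_part g a b s) in *.
  replace (f t - Jft - (f s - Jfs)) with ((f t - f s - SfB) + ((SfA + SfB - Jft) - (SfA - Jfs))) by ring.
  eapply Rle_trans; [apply Rabs_triang|].
  assert (hx : Rabs ((SfA + SfB - Jft) - (SfA - Jfs)) <= 2 * e).
  { apply Rabs_le; lra. }
  assert (hy : H * (g t - g s - SgB) <= H * (g t - Jgt - (g s - Jgs)) + 2 * Rabs H * e).
  { replace (H * (g t - g s - SgB)) with (H * (g t - Jgt - (g s - Jgs)) + H * ((SgA + SgB - Jgt) - (SgA - Jgs)) * (-1)) by ring.
    assert (H * ((SgA + SgB - Jgt) - (SgA - Jgs)) * (-1) <= Rabs (H * ((SgA + SgB - Jgt) - (SgA - Jgs)))).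
    { rewrite Rmult_comm. replace (-1 * (H * (SgA + SgB - Jgt - (SgA - Jgs)))) with (- (H * (SgA + SgB - Jgt - (SgA - Jgs)))) by ring.
      rewrite <- Rabs_Ropp. apply RRle_abs. }
    rewrite Rabs_mult in H0.
    assert (Rabs (SgA + SgB - Jgt - (SgA - Jgs)) <= 2 * e) by (apply Rabs_le; lra).
    assert (Rabs H * Rabs (SgA + SgB - Jgt - (SgA - Jgs)) <= Rabs H * (2 * e)) by (apply Rmult_le_compat_l; [apply Rabs_pos|lra]).
    lra. }
  lra.
Qed.

Lemma eps_le x y c : 0 <= c -> (forall e, 0 < e -> x <= y + c * e) -> x <= y.
Proof. intros hc h. destruct (Rle_or_lt x y) as [|hlt]; auto.
  set (e := (x - y) / (2 * (c + 1))).
  assert (he : 0 < e) by (unfold e; apply Rdiv_lt_0_compat; lra).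
  specialize (h e he).
  assert (c * e < x - y).
  { unfold e. apply (Rmult_lt_reg_r (2 * (c+1))). lra. field_simplify; try lra. nra. }
  lra. Qed.

Theorem mainTheorem5 (a b H : R) (f g : R -> R) :
  a < b ->
  increasing_on g a b ->
  (forall x, a < x < b -> left_continuous_at g a x) ->
  rel_lipschitz f g a b H ->
  rel_lipschitz (fun t => cont_part f a b t) (fun t => cont_part g a b t) a b H.
Proof.
  intros hab hg _ hf.
  assert (hl : rel_lipschitz g g a b 1) by (intros x y _ _; lra).
  assert (main : forall s t, a <= s -> s < t -> t <= b ->
    Rabs (cont_part f a b t - cont_part f a b s) <= H * Rabs (cont_part g a b t - cont_part g a b s)).
  { intros s t hs hst htb.
    assert (hG : Rabs (cont_part g a b t - cont_part g a b s) <= 1 * (cont_part g a b t - cont_part g a b s)).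
    { apply (eps_le _ _ (2 + 2 * Rabs 1)). pose proof (Rabs_pos 1); lra.
      intros e he. apply mainL; auto. }
    rewrite (Rabs_right (cont_part g a b t - cont_part g a b s)).
    2: { pose proof (Rabs_pos (cont_part g a b t - cont_part g a b s)). lra. }
    apply (eps_le _ _ (2 + 2 * Rabs H)). pose proof (Rabs_pos H); lra.
    intros e he. apply mainL; auto. }
  intros t s ht hs. simpl.
  destruct (Rtotal_order s t) as [hlt|[heq|hgt]].
  - apply main; lra.
  - subst. rewrite !Rminus_diag, Rabs_R0. lra.
  - rewrite (Rabs_minus_sym (cont_part f a b t)), (Rabs_minus_sym (cont_part g a b t)). apply main; lra.
Qed.
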